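(* Let $G$ be a dense $K_4^3\cup e$-free $3$-graph with $\lambda(G)>\frac{\sqrt3}{18}$. Then $G$ is $X_4$-free.
   Context: $K_4^3\cup e$ is the $3$-graph on $\{1,\dots,7\}$ with edges $\{123,124,134,234,567\}$. For a $3$-graph $G$ on $[n]$, $\lambda(G)=\max\{\sum_{e\in E(G)}\prod_{i\in e}x_i:\sum_ix_i=1,x_i\ge0\}$. An $r$-graph $G$ is dense if $\lambda(G')<\lambda(G)$ for every proper subgraph $G'$ of $G$. $X_i$ is the $3$-graph on $[2i+2]$ in which $\{1,2,2j+1,2j+2\}$ spans a $K_4^3$ for each $1\le j\le i$, and no other edges. *)

(* Defs.v *)
From HB Require Import structures.
From mathcomp Require Import all_boot all_order all_algebra.
From mathcomp Require Import all_classical all_reals.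
Set Implicit Arguments. Unset Strict Implicit. Unset Printing Implicit Defensive.
Import Order.TTheory GRing.Theory Num.Theory.
Local Open Scope classical_set_scope.
Local Open Scope ring_scope.

Definition is_3graph (n : nat) (E : {set {set 'I_n}}) : Prop :=
  forall e, e \in E -> #|e| = 3%N.

Definition lagr (R : realType) (n : nat) (V : {set 'I_n})
    (E : {set {set 'I_n}}) : R :=
  sup [set y : R | exists x : 'I_n -> R,
        [/\ (forall i, 0 <= x i), (forall i, i \notin V -> x i = 0),
            \sum_(i in V) x i = 1 &
            y = \sum_(e in E) \prod_(i in e) x i]].

Definition lambda (R : realType) (n : nat) (E : {set {set 'I_n}}) : R :=
  lagr R [set: 'I_n]%SET E.

Definition dense (R : realType) (n : nat) (E : {set {set 'I_n}}) : Prop :=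
  forall (V' : {set 'I_n}) (E' : {set {set 'I_n}}),
    E' \subset E -> (forall e, e \in E' -> e \subset V') ->
    (V' != [set: 'I_n]%SET) || (E' != E) ->
    lagr R V' E' < lambda R E.

(* G contains a copy of F (not necessarily induced): an injective vertex
   map sending every edge of F to an edge of G.  F-free = no copy. *)
Definition hcontains (m n : nat) (F : {set {set 'I_m}}) (E : {set {set 'I_n}})
  : Prop :=
  exists f : 'I_m -> 'I_n, injective f /\ forall e, e \in F -> f @: e \in E.

Definition hfree (m n : nat) (F : {set {set 'I_m}}) (E : {set {set 'I_n}})
  : Prop := ~ hcontains F E.

(* K_4^3 u e on {1..7} (here 0..6): edges 123,124,134,234,567. *)
Definition K43e : {set {set 'I_7}} :=
  [set e : {set 'I_7} | (#|e| == 3%N) &&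
     ((e \subset [set i : 'I_7 | (i < 4)%N]%SET) ||
      (e == [set i : 'I_7 | (4 <= i)%N]%SET))].

(* X_i on [2i+2] (here 0..2i+1): {1,2,2j+1,2j+2} spans K_4^3 for 1<=j<=i;
   0-indexed: {0,1,2j,2j+1}. *)
Definition X (k : nat) : {set {set 'I_(2 * k + 2)}} :=
  [set e : {set 'I_(2 * k + 2)} | (#|e| == 3%N) &&
     [exists j : 'I_k.+1, (0 < j)%N &&
        (e \subset [set i : 'I_(2 * k + 2) |
           [|| (i == 0%N :> nat), (i == 1%N :> nat),
               (i == (2 * j)%N :> nat) | (i == (2 * j).+1 :> nat)]]%SET)]].

(* Main.v *)
Require Import Defs.
From HB Require Import structures.
From mathcomp Require Import all_boot all_order all_algebra.
From mathcomp Require Import all_classical all_reals.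
From mathcomp Require Import ring lra zify.
From Stdlib Require Import Lia.
Import Order.TTheory GRing.Theory Num.Theory.
Local Open Scope ring_scope.

Lemma peel (R : realFieldType) n (x : 'I_n -> R) (u : 'I_n) (F : {set {set 'I_n}}) :
  (forall e, e \in F -> u \in e) ->
  \sum_(e in F) \prod_(i in e) x i =
  x u * \sum_(T in (fun e => e :\ u) @: F) \prod_(i in T) x i.
Proof.
move=> hu; rewrite big_imset /=; last first.
  move=> e1 e2 h1 h2 /= E.
  by rewrite -(finset.setD1K (hu _ h1)) -(finset.setD1K (hu _ h2)) E.
rewrite mulr_sumr; apply: eq_bigr => e he.
by rewrite (bigD1 u) ?hu //=; congr (_ * _); apply: eq_bigl => i; rewrite !inE andbC.
Qed.

Lemma kbound (R : realFieldType) n (x : 'I_n -> R) (hx : forall i, 0 <= x i) k :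
  forall (U : {set 'I_n}) (F : {set {set 'I_n}}),
  (forall T, T \in F -> T \subset U /\ #|T| = k) ->
  \sum_(T in F) \prod_(i in T) x i <= (\sum_(i in U) x i) ^+ k / (k`!)%:R.
Proof.
elim: k => [|k IH] U F hF.
  have e0 : forall T, T \in F -> T = finset.set0.
    by move=> T /hF [_ /eqP]; rewrite cards_eq0 => /eqP.
  rewrite expr0 fact0 divr1.
  rewrite (eq_bigr (fun _ => 1)); last by move=> T /e0 ->; rewrite big_set0.
  rewrite sumr_const.
  have : (#|[set T in F]| <= 1)%N.
    rewrite -(cards1 (@finset.set0 'I_n)); apply: subset_leq_card; apply/fintype.subsetP => T.
    by rewrite !inE => /e0 ->.
  rewrite cardsE; case: #|_| => [|[|//]] _; rewrite ?mulr0n ?mulr1n //.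
set S := \sum_(T in F) _.
set r := \sum_(i in U) x i.
have r0 : 0 <= r by apply: sumr_ge0.
have key : k.+1%:R * S = \sum_(u in U) x u * \sum_(T in (fun e => e :\ u) @: [set T in F | u \in T]) \prod_(i in T) x i.
  rewrite /S mulr_sumr.
  rewrite (eq_bigr (fun T : {set 'I_n} => \sum_(u in T) \prod_(i in T) x i)); last first.
    move=> T /hF [_ cT]; rewrite sumr_const -cT cardE /= -cardE mulr_natl //.
  rewrite (exchange_big_dep (mem U)) /=; last by move=> T u /hF [/fintype.subsetP sU _] /sU.
  apply: eq_bigr => u uU; rewrite -peel; last by move=> e; rewrite inE => /andP[].
  by apply: eq_bigl => T; rewrite inE.
have : k.+1%:R * S <= \sum_(u in U) x u * (r ^+ k / (k`!)%:R).
  rewrite key; apply: ler_sum => u uU; apply: ler_wpM2l => //; apply: IH.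
  move=> T /imsetP [T0]; rewrite inE => /andP [T0F uT0] ->; have [sU cT] := hF _ T0F.
  split; first by apply: fintype.subset_trans sU; apply: finset.subsetDl.
  by move: cT; rewrite (cardsD1 u) uT0 => -[].
rewrite -mulr_suml -/r => h.
have k1 : 0 < k.+1%:R :> R by rewrite ltr0n.
have kf : 0 < (k`!)%:R :> R by rewrite ltr0n fact_gt0.
rewrite factS natrM ler_pdivlMr ?mulr_gt0 //.
have e : r * (r ^+ k / (k`!)%:R) * (k`!)%:R = r ^+ k.+1.
  by rewrite exprS -mulrA mulfVK // gt_eqF.
rewrite -e; apply: le_trans (ler_wpM2r (ltW kf) h); by rewrite mulrA (mulrC S).
Qed.

Lemma cov_bound (R : realFieldType) n (G : {set {set 'I_n}}) (a b : 'I_n) (x : 'I_n -> R) :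
  a != b -> is_3graph G -> (forall e, e \in G -> (a \in e) || (b \in e)) ->
  (forall i, 0 <= x i) -> \sum_i x i = 1 ->
  \sum_(e in G) \prod_(i in e) x i <=
   x a * x b * (\sum_(i in ~: [set a; b]) x i) +
   (x a + x b) * ((\sum_(i in ~: [set a; b]) x i) ^+ 2 / 2).
Proof.
move=> ab h3 cov hx _.
set U := ~: [set a; b].
set r := \sum_(i in U) x i.
have U2 : forall (T : {set 'I_n}), a \notin T -> b \notin T -> T \subset U.
  move=> T aT bT; apply/fintype.subsetP => i iT; rewrite !inE; apply/negP => /orP[] /eqP E;
  by [rewrite -E iT in aT | rewrite -E iT in bT].
rewrite (bigID (fun e : {set 'I_n} => a \in e)) /= (bigID (fun e : {set 'I_n} => b \in e)) /=.
rewrite mulrDl -!addrA; apply: lerD; [|apply: lerD].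
- rewrite (eq_bigl (fun e => e \in [set e in G | (a \in e) && (b \in e)])); last first.
    by move=> e; rewrite !inE andbA.
  rewrite (@peel _ _ _ a); last by move=> e; rewrite inE => /and3P[].
  rewrite -mulrA; apply: ler_wpM2l => //.
  rewrite (@peel _ _ _ b); last first.
    move=> e /imsetP [e0]; rewrite inE => /and3P[_ _ be0] ->.
    by rewrite !inE be0 eq_sym ab.
  apply: ler_wpM2l => //.
  have := @kbound R n x hx 1 U ((fun e => e :\ b) @: ((fun e => e :\ a) @: [set e in G | (a \in e) && (b \in e)])).
  rewrite expr1 divr1; apply.
  move=> T /imsetP [T1 /imsetP [e0]]; rewrite inE => /and3P[e0G ae0 be0] -> ->.
  split; first by apply: U2; rewrite !inE ?eqxx ?andbF //= eq_sym ab.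
  move: (h3 _ e0G); rewrite (cardsD1 a) ae0 (cardsD1 b) !inE be0 eq_sym ab /=.
  by case.
- rewrite (eq_bigl (fun e => e \in [set e in G | (a \in e) && (b \notin e)])); last first.
    by move=> e; rewrite !inE andbA.
  rewrite (@peel _ _ _ a); last by move=> e; rewrite inE => /and3P[].
  apply: ler_wpM2l => //.
  apply: kbound => // T /imsetP [e0]; rewrite inE => /and3P[e0G ae0 be0] ->.
  split; first by apply: U2; rewrite !inE ?eqxx //= (negPf be0) andbF.
  by move: (h3 _ e0G); rewrite (cardsD1 a) ae0 => -[].
- rewrite (eq_bigl (fun e => e \in [set e in G | a \notin e])); last first.
    by move=> e; rewrite !inE.
  rewrite (@peel _ _ _ b); last by move=> e; rewrite inE => /andP[eG ae]; move: (cov _ eG); rewrite (negPf ae).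
  apply: ler_wpM2l => //.
  apply: kbound => // T /imsetP [e0]; rewrite inE => /andP[e0G ae0] ->.
  split; first by apply: U2; rewrite !inE ?eqxx //= (negPf ae0) andbF.
  have be0 : b \in e0 by move: (cov _ e0G); rewrite (negPf ae0).
  by move: (h3 _ e0G); rewrite (cardsD1 b) be0 => -[].
Qed.

Lemma num_bound (R : rcfType) (p q r : R) : 0 <= p -> 0 <= q -> 0 <= r -> p + q + r = 1 ->
  p * q * r + (p + q) * (r ^+ 2 / 2) <= Num.sqrt 3 / 18.
Proof.
move=> hp hq hr hs.
set s := Num.sqrt 3.
have s0 : 0 <= s by apply: sqrtr_ge0.
have s2 : s ^+ 2 = 3 by rewrite sqr_sqrtr.
have h1 : p * q * r <= (p + q) ^+ 2 / 4 * r.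
  apply: ler_wpM2r => //. have := sqr_ge0 (p - q). nra.
have h2 : 0 <= (3 * r - s) ^+ 2 * (r + 2 * s / 3).
  apply: mulr_ge0; [exact: sqr_ge0 | nra].
nra.
Qed.

Lemma lambda_le (R : realType) n (G : {set {set 'I_n}}) (a b : 'I_n) :
  a != b -> is_3graph G -> (forall e, e \in G -> (a \in e) || (b \in e)) ->
  lambda R G <= Num.sqrt 3 / 18.
Proof.
move=> ab h3 cov; rewrite /lambda /lagr.
apply: ge_sup.
  exists (\sum_(e in G) \prod_(i in e) (fun i : 'I_n => (i == a)%:R : R) i).
  exists (fun i : 'I_n => (i == a)%:R); split => //.
  - by move=> i; rewrite inE.
  - rewrite (bigD1 a) ?inE //= eqxx big1 ?addr0 // => i /andP[_ /negPf ->] //.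
move=> y [x [hx _ hs ->]].
have hs' : \sum_i x i = 1 by rewrite -hs; apply: eq_bigl => i; rewrite inE.
apply: (le_trans (@cov_bound R n G a b x ab h3 cov hx hs')).
apply: num_bound => //; first by apply: sumr_ge0.
have E2 : \sum_(i in [set a; b]) x i = x a + x b.
  rewrite (bigD1 a) ?inE ?eqxx //= (bigD1 b) ?inE ?eqxx ?orbT /=; last by rewrite eq_sym ab.
  rewrite big1 ?addr0 // => i; rewrite !inE.
  by case: (i == a) => //; case: (i == b).
rewrite -hs' [RHS](bigID (mem [set a; b])) /= E2.
congr (_ + _); apply: eq_bigl => i; rewrite !inE //.
Qed.

Lemma hitK4 n (G : {set {set 'I_n}}) (l4 : seq 'I_n) :
  is_3graph G -> hfree K43e G -> uniq l4 -> size l4 = 4%N ->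
  (forall s : {set 'I_n}, {subset s <= l4} -> #|s| = 3%N -> s \in G) ->
  forall e, e \in G -> exists2 v, v \in e & v \in l4.
Proof.
move=> h3 hfr u4 s4 hS e eG.
case: (boolP [exists v in e, v \in l4]) => [/exists_inP //|/exists_inPn dis]; exfalso.
have ce := h3 _ eG.
have [x0 _] : exists x0, x0 \in e by apply/card_gt0P; rewrite ce.
set l := l4 ++ enum e.
have sl : size l = 7%N by rewrite size_cat -cardE ce s4.
have ul : uniq l.
  rewrite cat_uniq u4 enum_uniq /= andbT; apply/hasPn => v; rewrite mem_enum => ve.
  exact: dis.
pose g (i : 'I_7) := nth x0 l i.
have ginj : injective g.
  move=> i j /eqP; rewrite /g nth_uniq ?sl ?ltn_ord // => /eqP; apply: val_inj.
apply: hfr; exists g; split => // t; rewrite inE => /andP [ct /orP [st|/eqP te]].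
- apply: hS; last by rewrite card_imset // (eqP ct).
  move=> v /imsetP [i it ->]; rewrite /g nth_cat.
  have i4 : (i < size l4)%N.
    by move/fintype.subsetP: st => /(_ i it); rewrite inE s4.
  by rewrite i4 mem_nth.
- have -> : g @: t = e.
    apply/eqP; rewrite finset.eqEsubset; apply/andP; split.
      apply/fintype.subsetP => v /imsetP [i]; rewrite te inE => i4 ->.
      rewrite /g nth_cat s4 ltnNge i4 /= -mem_enum; apply: mem_nth.
      by rewrite -cardE ce; have := ltn_ord i; lia.
    apply/fintype.subsetP => v ve.
    have ki : (index v (enum e) < 3)%N by rewrite -ce cardE index_mem mem_enum.
    apply/imsetP; exists (inord (4 + index v (enum e))).
      by rewrite te inE inordK //; lia.
    rewrite /g inordK; last by lia.
    by rewrite nth_cat s4 ltnNge leq_addr /= addKn nth_index // mem_enum.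
  exact: eG.
Qed.

Lemma blk n (G : {set {set 'I_n}}) (f : 'I_10 -> 'I_n) (j : nat) :
  injective f -> (forall e, e \in X 4 -> f @: e \in G) ->
  is_3graph G -> hfree K43e G -> (0 < j < 5)%N ->
  forall e, e \in G -> exists2 v, v \in e &
    v \in map f [:: inord 0; inord 1; inord (2 * j); inord (2 * j).+1].
Proof.
move=> finj hf h3 hfr hj e eG.
apply: (@hitK4 n G _ h3 hfr) => //.
- rewrite map_inj_uniq //= !inE -!val_eqE /= !inordK //; lia.
move=> s ss cs.
have ss' : forall v, v \in s -> exists2 i, v = f i & i \in [:: inord 0; inord 1; inord (2 * j); inord (2 * j).+1].
  by move=> v /ss /mapP [i ii ->]; exists i.
have hs : s = f @: (f @^-1: s).
  apply/eqP; rewrite finset.eqEsubset; apply/andP; split.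
    apply/fintype.subsetP => v vs; have [i vi _] := ss' _ vs.
    by apply/imsetP; exists i => //; rewrite inE -vi.
  by apply/fintype.subsetP => v /imsetP [i]; rewrite inE => iv ->.
have cs' : #|f @^-1: s| = 3%N.
  by rewrite -(card_imset _ finj) -hs.
rewrite {1}hs; apply: hf; rewrite inE cs' eqxx /=; apply/existsP; exists (inord j).
rewrite inordK; last by lia.
apply/andP; split; first by lia.
apply/fintype.subsetP => i; rewrite inE => /ss /mapP [k kL /finj ik]; subst k.
move: kL; rewrite inE !inE -!val_eqE /= !inordK; [|lia..].
by [].
Qed.

Lemma cover n (G : {set {set 'I_n}}) (f : 'I_10 -> 'I_n) :
  injective f -> (forall e, e \in X 4 -> f @: e \in G) ->
  is_3graph G -> hfree K43e G ->
  forall e, e \in G -> (f (inord 0) \in e) || (f (inord 1) \in e).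
Proof.
move=> finj hf h3 hfr e eG.
apply/negPn/negP; rewrite negb_or => /andP [n0 n1].
have H : forall j, (0 < j < 5)%N -> exists2 w : 'I_10, f w \in e &
    (val w == 2 * j)%N || (val w == (2 * j).+1)%N.
  move=> j hj; have [v ve] := @blk n G f j finj hf h3 hfr hj e eG.
  rewrite /= !inE => /or4P [] /eqP vE; subst v.
  - by rewrite ve in n0.
  - by rewrite ve in n1.
  - by exists (inord (2 * j)); rewrite // inordK ?eqxx //; lia.
  - by exists (inord (2 * j).+1); rewrite // inordK ?eqxx ?orbT //; lia.
have [w1 e1 h1] := H 1%N isT.
have [w2 e2 h2] := H 2%N isT.
have [w3 e3 h3'] := H 3%N isT.
have [w4 e4 h4] := H 4%N isT.
have u : uniq (map f [:: w1; w2; w3; w4]).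
  rewrite map_inj_uniq //= !inE -!val_eqE /=.
  move: h1 h2 h3' h4 => /orP [] /eqP -> /orP [] /eqP -> /orP [] /eqP -> /orP [] /eqP -> //.
have : (#|map f [:: w1; w2; w3; w4]| <= #|e|)%N.
  apply: subset_leq_card; apply/fintype.subsetP => v; rewrite /= !inE.
  by case/or4P => /eqP ->.
by rewrite (card_uniqP u) (h3 _ eG).
Qed.

Theorem lemma5p10 (R : realType) (n : nat) (G : {set {set 'I_n}}) :
  is_3graph G -> dense R G -> hfree K43e G ->
  Num.sqrt 3 / 18 < lambda R G ->
  hfree (X 4) G.
Proof.
move=> h3 _ hfr hl [f [finj hf]].
have cov := @cover n G f finj hf h3 hfr.
have ab : f (inord 0) != f (inord 1).
  by rewrite (inj_eq finj) -val_eqE /= !inordK.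
have := @lambda_le R n G _ _ ab h3 cov.
by rewrite leNgt hl.
Qed.
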